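(* Let $\mathcal{S}\subseteq\mathcal{P}_{fin}(\mathbb{N})$ be an IP set, $r\geq1$, and $c:\mathcal{S}\rightarrow[1,r]$ a coloring. Then at least one of the following holds: (1) there is an IP set $\mathcal{S}'\subseteq\mathcal{S}$ such that $c$ is constant on $\mathcal{S}'$; or (2) there are a finite collection $\mathcal{B}\subseteq\mathcal{S}$ and an IP set $\mathcal{T}\subseteq\mathcal{S}-\mathcal{B}$ such that $\mathcal{B}$ full-matches $\mathcal{T}$.
   Context: $\mathcal{P}_{fin}(\mathbb{N})$ is the set of finite subsets of $\mathbb{N}$. A set $\mathcal{S}\subseteq\mathcal{P}_{fin}(\mathbb{N})$ is an IP set if it is closed under finite unions and contains an infinite family of pairwise disjoint elements. For $B\in\mathcal{S}$, $\mathcal{S}-B:=\{T\in\mathcal{S}: T\cap B=\emptyset\}$, and for $\mathcal{B}\subseteq\mathcal{S}$, $\mathcal{S}-\mathcal{B}:=\bigcap_{B\in\mathcal{B}}(\mathcal{S}-B)$. Relative to a coloring $c$: a family $\mathcal{D}$ full-matches a set $B$ if there is $D\in\mathcal{D}$ with $c(D)=c(B)=c(D\cup B)$; $\mathcal{D}$ full-matches a family $\mathcal{B}$ if it full-matches every $B\in\mathcal{B}$. *)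

(* Defs.v *)
From mathcomp Require Import all_boot.
From Stdlib Require List.
Set Implicit Arguments. Unset Strict Implicit. Unset Printing Implicit Defensive.

Definition natset := nat -> bool.

Definition finite_natset (A : natset) : Prop := exists n, forall m, A m -> m < n.

Definition natfam := natset -> Prop.

Definition nsetU (A B : natset) : natset := fun n => A n || B n.
Definition ndisjoint (A B : natset) : Prop := forall n, ~~ (A n && B n).
Definition ndiff (A B : natset) : Prop := exists n, A n <> B n.

(* S is an IP set: S ⊆ P_fin(N), closed under (binary, hence finite) unions,
   and contains an infinite family of pairwise disjoint elements (given as an
   injective sequence of pairwise disjoint members). *)
Definition IPset (S : natfam) : Prop :=
  (forall A, S A -> finite_natset A) /\
  (forall A B, S A -> S B -> S (nsetU A B)) /\
  exists D : nat -> natset,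
    (forall i, S (D i)) /\
    (forall i j, i <> j -> ndiff (D i) (D j)) /\
    (forall i j, i <> j -> ndisjoint (D i) (D j)).

(* S - Bs : elements of S disjoint from every member of the collection Bs *)
Definition fam_minus (S : natfam) (Bs : list natset) : natfam :=
  fun T => S T /\ forall B, List.In B Bs -> ndisjoint T B.

Definition full_matches_set (c : natset -> nat) (Ds : list natset) (B : natset) : Prop :=
  exists D, List.In D Ds /\ c D = c B /\ c B = c (nsetU D B).

Definition full_matches (c : natset -> nat) (Ds : list natset) (T : natfam) : Prop :=
  forall B, T B -> full_matches_set c Ds B.

(* Main.v *)
Require Import Defs.
From mathcomp Require Import all_boot.
From Stdlib Require List.
From Stdlib Require Import Classical ClassicalEpsilon FunctionalExtensionality.
Set Implicit Arguments. Unset Strict Implicit. Unset Printing Implicit Defensive.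

Lemma nsetUC A B : nsetU A B = nsetU B A.
Proof. apply: functional_extensionality => n; by rewrite /nsetU orbC. Qed.
Lemma nsetUA A B C : nsetU A (nsetU B C) = nsetU (nsetU A B) C.
Proof. apply: functional_extensionality => n; by rewrite /nsetU orbA. Qed.
Lemma nsetUU A : nsetU A A = A.
Proof. apply: functional_extensionality => n; by rewrite /nsetU orbb. Qed.
Definition nset0 : natset := fun _ => false.
Lemma nset0U A : nsetU nset0 A = A.
Proof. apply: functional_extensionality => n; by []. Qed.

Definition below (X : natset) m := forall u, X u -> u < m.
Definition above (X : natset) m := forall u, X u -> m <= u.

Definition blockseq (E : nat -> natset) :=
  (forall i, exists u, E i u) /\ (forall i, exists m, below (E i) m) /\
  (forall i j u v, i < j -> E i u -> E j v -> u < v).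

Inductive fu (E : nat -> natset) : natset -> Prop :=
| fu1 i : fu E (E i)
| fuU X Y : fu E X -> fu E Y -> fu E (nsetU X Y).

Definition cond (E D : nat -> natset) := blockseq E /\ forall i, fu D (E i).
Definition large (Z : natfam) (D : nat -> natset) :=
  forall E, cond E D -> exists X, fu E X /\ Z X.

Lemma choice1 (A C : Type) (R : A -> C -> Prop) :
  (forall a, exists c, R a c) -> exists f : A -> C, forall a, R a (f a).
Proof.
move=> H; exists (fun a => proj1_sig (constructive_indefinite_description _ (H a))).
move=> a; exact: proj2_sig (constructive_indefinite_description _ (H a)).
Qed.

Lemma choice2 (A B C : Type) (R : A -> B -> C -> Prop) :
  (forall a b, exists c, R a b c) -> exists f : A -> B -> C, forall a b, R a b (f a b).
Proof.
move=> H; exists (fun a b => proj1_sig (constructive_indefinite_description _ (H a b))).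
move=> a b; exact: proj2_sig (constructive_indefinite_description _ (H a b)).
Qed.

Lemma mono_step (f : nat -> nat) : (forall k, f k <= f k.+1) ->
  forall a b, a <= b -> f a <= f b.
Proof.
move=> H a b; elim: b => [|b IH]; first by rewrite leqn0 => /eqP ->.
rewrite leq_eqVlt => /orP [/eqP -> //| ]; rewrite ltnS => /IH h.
exact: leq_trans h (H b).
Qed.

Lemma fu_mem (E : nat -> natset) (X : natset) u : fu E X -> X u -> exists i, E i u.
Proof.
elim=> [i|X1 Y1 _ IH1 _ IH2]; first by exists i.
by rewrite /nsetU => /orP [/IH1|/IH2].
Qed.

Lemma fu_nonempty (E : nat -> natset) (X : natset) : (forall i, exists u, E i u) -> fu E X -> exists u, X u.
Proof.
move=> H; elim=> [i|X1 Y1 _ [u Hu] _ _]; first exact: H.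
by exists u; rewrite /nsetU Hu.
Qed.

Lemma fu_below (E : nat -> natset) (X : natset) : (forall i, exists m, below (E i) m) -> fu E X -> exists m, below X m.
Proof.
move=> H; elim=> [i|X1 Y1 _ [m1 H1] _ [m2 H2]]; first exact: H.
exists (maxn m1 m2) => u; rewrite /nsetU => /orP [/H1|/H2] h.
  by rewrite leq_max h.
by rewrite leq_max h orbT.
Qed.

Lemma fu_above (E : nat -> natset) (X : natset) m : (forall i, above (E i) m) -> fu E X -> above X m.
Proof. move=> H HX u /(fu_mem HX) [i]; exact: H. Qed.

Lemma fu_trans (E D : nat -> natset) (X : natset) : (forall i, fu D (E i)) -> fu E X -> fu D X.
Proof. move=> H; elim=> [i|X1 Y1 _ h1 _ h2]; [exact: H | exact: fuU]. Qed.

Lemma cond_trans E D' D : cond E D' -> cond D' D -> cond E D.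
Proof. move=> [hE h1] [_ h2]; split=> // i; exact: fu_trans h2 (h1 i). Qed.

Lemma cond_refl D : blockseq D -> cond D D.
Proof. by move=> h; split=> // i; exact: fu1. Qed.

Lemma large_cond Z D E : large Z D -> cond E D -> large Z E.
Proof. move=> HL hE F hF; apply: HL; exact: cond_trans hF hE. Qed.

Lemma block_ge (D : nat -> natset) k v : blockseq D -> D k v -> k <= v.
Proof.
move=> [hn [_ ho]]; elim: k v => [//|k IH] v hv.
have [u hu] := hn k; have := ho _ _ _ _ (ltnSn k) hu hv.
by move/(leq_ltn_trans (IH _ hu)).
Qed.

Lemma tail_cond D m : blockseq D -> cond (fun i => D (m + i)) D.
Proof.
move=> [hn [hb ho]]; split; last by move=> i; exact: fu1.
split; first by move=> i; exact: hn.
split; first by move=> i; exact: hb.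
move=> i j u v hij; apply: ho; by rewrite ltn_add2l.
Qed.

Lemma tail_above (D : nat -> natset) m (X : natset) : blockseq D -> fu (fun i => D (m + i)) X -> above X m.
Proof.
move=> hD; apply: fu_above => i u hu.
exact: leq_trans (leq_addr i m) (block_ge hD hu).
Qed.

Lemma cover (I : Type) (L : list I) (P : I -> natfam) (A : natfam) (D : nat -> natset) :
  blockseq D -> large A D ->
  (forall X, fu D X -> A X -> exists y, List.In y L /\ P y X) ->
  exists y D', List.In y L /\ cond D' D /\ large (P y) D'.
Proof.
elim: L D => [|y0 L IH] D hD hL hc.
  have [X [hX hA]] := hL D (cond_refl hD).
  by have [y [[]]] := hc X hX hA.
case: (classic (large (P y0) D)) => hy0.
  by exists y0, D; split; [left|split; [exact: cond_refl|]].
have [E [hE hEX]] : exists E, cond E D /\ forall X, fu E X -> ~ P y0 X.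
  apply: NNPP => hn; apply: hy0 => E hE; apply: NNPP => hx; apply: hn.
  exists E; split=> // X hX hP; apply: hx; by exists X.
have hc' : forall X, fu E X -> A X -> exists y, List.In y L /\ P y X.
  move=> X hX hA; have [y [hy hP]] := hc X (fu_trans (proj2 hE) hX) hA.
  case: hy => [hy|hy]; last by exists y.
  by subst y; have := hEX X hX hP.
have [y [D' [hy [hD' hl]]]] := IH E (proj1 hE) (large_cond hL hE) hc'.
exists y, D'; split; first by right.
split=> //; exact: cond_trans hD' hE.
Qed.

Fixpoint sst (g : nat -> list natset -> natset) (bnd : natset -> nat) k : nat * list natset :=
  match k with
  | 0 => (0, nil)
  | k'.+1 => let p := sst g bnd k' in let x := g p.1 p.2 in
             (bnd x, p.2 ++ x :: map (fun y => nsetU y x) p.2)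
  end.

Lemma inL_app (l1 l2 : list natset) y : List.In y l1 -> List.In y (l1 ++ l2).
Proof. move=> h; apply: List.in_or_app; by left. Qed.

Lemma in_app3 (l : list natset) (x : natset) (f : natset -> natset) (y : natset) :
  List.In y (l ++ x :: map f l) -> List.In y l \/ x = y \/ List.In y (map f l).
Proof. by move=> h; case: (List.in_app_or _ _ _ h) => [|[]]; auto. Qed.

Lemma in_mapE (f : natset -> natset) (l : list natset) y :
  List.In y (map f l) -> exists z, f z = y /\ List.In z l.
Proof.
elim: l => [//|a l IH] /= [<-|/IH [z [h1 h2]]]; first by exists a; split=> //; left.
by exists z; split=> //; right.
Qed.

Lemma in_mapI (f : natset -> natset) (l : list natset) z :
  List.In z l -> List.In (f z) (map f l).
Proof. elim: l => [//|a l IH] /= [->|/IH h]; [by left | by right]. Qed.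

Lemma dbl_lt i j : i < j -> i.*2.+1 < j.*2.
Proof. by move=> h; rewrite -doubleS leq_double. Qed.

Lemma syndetic (Z : natfam) (D : nat -> natset) : blockseq D -> large Z D ->
  exists m (L : list natset), (forall y, List.In y L -> fu D y /\ below y m) /\
   forall x, fu D x -> above x m -> exists y, List.In y L /\ Z (nsetU y x).
Proof.
move=> hD hL; apply: NNPP => Hn.
have H : forall m (L : list natset), (forall y, List.In y L -> fu D y /\ below y m) ->
    exists x, fu D x /\ above x m /\ forall y, List.In y L -> ~ Z (nsetU y x).
  move=> m L HL; apply: NNPP => Hx; apply: Hn; exists m, L; split=> // x h1 h2.
  apply: NNPP => Hy; apply: Hx; exists x; do 2!split=> //.
  move=> y hy hZ; apply: Hy; by exists y.
have [g Hg] : exists g : nat -> list natset -> natset, forall m L,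
    (forall y, List.In y L -> fu D y /\ below y m) ->
    fu D (g m L) /\ above (g m L) m /\ forall y, List.In y L -> ~ Z (nsetU y (g m L)).
  have: forall m (L : list natset), exists c : natset,
    (forall y, List.In y L -> fu D y /\ below y m) ->
    fu D c /\ above c m /\ forall y, List.In y L -> ~ Z (nsetU y c).
    move=> m L; case: (classic (forall y, List.In y L -> fu D y /\ below y m)).
      by move=> /H [x hx]; exists x.
    by move=> hn; exists nset0.
  by move/choice2.
have [bnd Hb] : exists bnd : natset -> nat, forall x, fu D x -> below x (bnd x).
  have: forall x : natset, exists b, fu D x -> below x b.
    move=> x; case: (classic (fu D x)) => hx.
      have [m hm] := fu_below (proj1 (proj2 hD)) hx; by exists m.
    by exists 0.
  by move/choice1.
pose m k := (sst g bnd k).1.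
pose L k := (sst g bnd k).2.
pose x k := g (m k) (L k).
have mS k : m k.+1 = bnd (x k) by [].
have LS k : L k.+1 = L k ++ x k :: map (fun y => nsetU y (x k)) (L k) by [].
have inv : forall k, forall y, List.In y (L k) -> fu D y /\ below y (m k).
  elim=> [|k IH] y; first by move=> /= [].
  have [hx [ha _]] := Hg _ _ IH.
  have hbx := Hb _ hx.
  have mle : m k <= m k.+1.
    have [u hu] := fu_nonempty (proj1 hD) hx.
    exact: leq_trans (ha _ hu) (ltnW (hbx _ hu)).
  rewrite LS => /in_app3 [hy|[<-|hy]].
  - have [h1 h2] := IH _ hy; split=> // u /h2 h; exact: leq_trans h mle.
  - by split.
  - have [z [<- hz]] := in_mapE hy.
    have [h1 h2] := IH _ hz; split; first exact: fuU.
    move=> u; rewrite /nsetU => /orP [/h2 h|/hbx //]; exact: leq_trans h mle.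
have xP k : fu D (x k) /\ above (x k) (m k) /\ below (x k) (m k.+1) /\
    forall y, List.In y (L k) -> ~ Z (nsetU y (x k)).
  have [hx [ha hz]] := Hg _ _ (inv k); by do ! split => //; rewrite mS; apply: Hb.
have mle : forall k, m k <= m k.+1.
  move=> k; have [hx [ha [hb _]]] := xP k.
  have [u hu] := fu_nonempty (proj1 hD) hx.
  exact: leq_trans (ha _ hu) (ltnW (hb _ hu)).
have mmono := mono_step mle.
have xord : forall a b u v, a < b -> x a u -> x b v -> u < v.
  move=> a b u v hab hu hv.
  have [_ [_ [hb _]]] := xP a; have [_ [ha _]] := xP b.
  exact: leq_trans (hb _ hu) (leq_trans (mmono _ _ hab) (ha _ hv)).
have Lmono : forall a b y, a <= b -> List.In y (L a) -> List.In y (L b).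
  move=> a b y /subnKC <-; elim: (b - a) => [|n IH]; first by rewrite addn0.
  by rewrite addnS LS => /IH h; apply: inL_app.
have xinL : forall k, List.In (x k) (L k.+1).
  by move=> k; rewrite LS; apply: List.in_or_app; right; left.
have xUinL : forall k y, List.In y (L k) -> List.In (nsetU y (x k)) (L k.+1).
  move=> k y hy; rewrite LS; apply: List.in_or_app; right; right.
  exact: in_mapI.
have Lclos : forall k y1 y2, List.In y1 (L k) -> List.In y2 (L k) ->
    List.In (nsetU y1 y2) (L k).
  elim=> [|k IH] y1 y2 //; rewrite LS => /in_app3 [h1|[<-|h1]]
     /in_app3 [h2|[<-|h2]].
  - apply: inL_app; exact: IH.
  - by rewrite -LS; apply: xUinL.
  - have [z [<- hz]] := in_mapE h2.
    by rewrite -LS nsetUA; apply: xUinL; apply: IH.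
  - by rewrite -LS nsetUC; apply: xUinL.
  - by rewrite nsetUU -LS.
  - have [z [<- hz]] := in_mapE h2.
    by rewrite -LS nsetUC -nsetUA nsetUU; apply: xUinL.
  - have [z [<- hz]] := in_mapE h1.
    rewrite -LS -nsetUA [nsetU (x k) y2]nsetUC nsetUA; apply: xUinL; exact: IH.
  - have [z [<- hz]] := in_mapE h1.
    by rewrite -LS -nsetUA nsetUU; apply: xUinL.
  - have [z1 [<- hz1]] := in_mapE h1.
    have [z2 [<- hz2]] := in_mapE h2.
    have -> : nsetU (nsetU z1 (x k)) (nsetU z2 (x k)) = nsetU (nsetU z1 z2) (x k).
      apply: functional_extensionality => n; rewrite /nsetU.
      by case: (z1 n); case: (z2 n); case: (x k n).
    rewrite -LS; apply: xUinL; exact: IH.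
pose E j := nsetU (x j.*2) (x j.*2.+1).
have hE : cond E D.
  split; last by move=> j; apply: fuU; apply: (xP _).1.
  split.
    move=> j; have [u hu] := fu_nonempty (proj1 hD) (xP j.*2).1.
    by exists u; rewrite /E /nsetU hu.
  split.
    move=> j; exists (m j.*2.+2) => u; rewrite /E /nsetU => /orP [hu|hu].
      have [_ [_ [hb _]]] := xP j.*2.
      exact: leq_trans (hb _ hu) (mle _).
    by have [_ [_ [hb _]]] := xP j.*2.+1; apply: hb.
  move=> i j u v hij; rewrite /E /nsetU => /orP [hu|hu] /orP [hv|hv];
    apply: xord hu hv.
  - exact: ltn_trans (ltnSn _) (dbl_lt hij).
  - exact: ltn_trans (ltnSn _) (ltn_trans (dbl_lt hij) (ltnSn _)).
  - exact: dbl_lt hij.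
  - exact: ltn_trans (dbl_lt hij) (ltnSn _).
have char : forall X, fu E X -> exists j y, List.In y (L j.*2.+1) /\
    X = nsetU y (x j.*2.+1).
  move=> X; elim=> [j|X1 X2 _ [j1 [y1 [hy1 ->]]] _ [j2 [y2 [hy2 ->]]]].
    exists j, (x j.*2); split=> //; exact: xinL.
  have key : forall j1 j2 y1 y2, j1 <= j2 -> List.In y1 (L j1.*2.+1) ->
      List.In y2 (L j2.*2.+1) -> exists j y, List.In y (L j.*2.+1) /\
      nsetU (nsetU y1 (x j1.*2.+1)) (nsetU y2 (x j2.*2.+1)) = nsetU y (x j.*2.+1).
    move=> a b z1 z2; rewrite leq_eqVlt => /orP [/eqP ->|hab] h1 h2; exists b.
      exists (nsetU z1 z2); split; first exact: Lclos.
      apply: functional_extensionality => n; rewrite /nsetU.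
      by case: (z1 n); case: (z2 n); case: (x b.*2.+1 n).
    exists (nsetU (nsetU z1 (x a.*2.+1)) z2); split; last by rewrite nsetUA.
    apply: Lclos => //; apply: Lmono (xUinL _ _ h1).
    exact: leqW (dbl_lt hab).
  case: (leqP j1 j2) => hj; first exact: key.
  rewrite nsetUC; apply: key => //; exact: ltnW.
have [X [hX hZ]] := hL E hE.
have [j [y [hy eX]]] := char X hX.
have [_ [_ [_ hz]]] := xP j.*2.+1.
by apply: (hz y hy); rewrite -eX.
Qed.

Lemma wk (Z : natfam) (D : nat -> natset) : blockseq D -> large Z D ->
  exists y m D', fu D y /\ below y m /\ (forall i, above (D' i) m) /\ cond D' D /\
     large (fun x => Z x /\ Z (nsetU y x)) D'.
Proof.
move=> hD hL.
have [m [L [hL1 hL2]]] := syndetic hD hL.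
pose T i := D (m + i).
have hT : cond T D := tail_cond m hD.
have hc : forall X, fu T X -> Z X -> exists y, List.In y L /\ (fun y X => Z X /\ Z (nsetU y X)) y X.
  move=> X hX hZ.
  have [y [hy hy2]] := hL2 X (fu_trans (proj2 hT) hX) (tail_above hD hX).
  by exists y.
have [y [D' [hy [hD' hl]]]] := cover (proj1 hT) (large_cond hL hT) hc.
have [h1 h2] := hL1 _ hy.
exists y, m, D'; split=> //; split=> //; split.
  move=> i; exact: tail_above hD (proj2 hD' i).
split=> //; exact: cond_trans hD' hT.
Qed.

Fixpoint hst (W : natfam -> (nat -> natset) -> natset * nat * (nat -> natset))
  (X : natfam) (D : nat -> natset) n : natfam * (nat -> natset) :=
  match n with
  | 0 => (X, D)
  | n'.+1 => let p := hst W X D n' in let w := W p.1 p.2 in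
      ((fun x => p.1 x /\ p.1 (nsetU w.1.1 x)), w.2)
  end.

Inductive yur (y : nat -> natset) (a b : nat) : natset -> Prop :=
| yur1 i : a <= i -> i < b -> yur y a b (y i)
| yurU z1 z2 : yur y a b z1 -> yur y a b z2 -> yur y a b (nsetU z1 z2).

Lemma yur_lt (y : nat -> natset) a b z : yur y a b z -> a < b.
Proof. elim=> // i h1 h2; exact: leq_ltn_trans h1 h2. Qed.

Lemma yur_mono (y : nat -> natset) a b a' b' z : a' <= a -> b <= b' -> yur y a b z -> yur y a' b' z.
Proof.
move=> ha hb; elim=> [i h1 h2|z1 z2 _ h1 _ h2]; last exact: yurU.
apply: yur1; [exact: leq_trans ha h1 | exact: leq_trans h2 hb].
Qed.

Lemma yur_mem (y : nat -> natset) a b (z : natset) u : yur y a b z -> z u -> exists i, a <= i < b /\ y i u.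
Proof.
move=> h; elim: h u => [i h1 h2|z1 z2 _ IH1 _ IH2] u.
  by move=> hu; exists i; rewrite h1 h2.
by rewrite /nsetU => /orP [/IH1|/IH2].
Qed.

Lemma yur_nonempty (y : nat -> natset) a b (z : natset) : (forall i, exists u, y i u) -> yur y a b z -> exists u, z u.
Proof.
move=> hy; elim=> [i _ _|z1 z2 _ [u hu] _ _]; first exact: hy.
by exists u; rewrite /nsetU hu.
Qed.

Lemma yur_bound (y : nat -> natset) a b (z : natset) : (forall i, exists m, below (y i) m) -> yur y a b z ->
  exists m, below z m.
Proof.
move=> hy; elim=> [i _ _|z1 z2 _ [m1 H1] _ [m2 H2]]; first exact: hy.
exists (maxn m1 m2) => u; rewrite /nsetU => /orP [/H1|/H2] h.
  by rewrite leq_max h.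
by rewrite leq_max h orbT.
Qed.

Lemma yur_fu (y : nat -> natset) a b D z : (forall i, fu D (y i)) -> yur y a b z -> fu D z.
Proof. move=> hy; elim=> [i _ _|z1 z2 _ h1 _ h2]; [exact: hy|exact: fuU]. Qed.

Lemma yur_dec (y : nat -> natset) a n z : yur y a n.+1 z -> yur y a n z \/
  (a <= n /\ (z = y n \/ exists z', yur y a n z' /\ z = nsetU z' (y n))).
Proof.
elim=> [i h1 h2|z1 z2 _ IH1 _ IH2].
  move: h2; rewrite ltnS leq_eqVlt => /orP [/eqP e|h2].
    subst i.
    by right; split=> //; left.
  by left; apply: yur1.
case: IH1 => [h1|[ha [e1|[w1 [hw1 e1]]]]]; case: IH2 => [h2|[hb [e2|[w2 [hw2 e2]]]]].
- by left; apply: yurU.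
- by right; split; [exact: ltnW (yur_lt h1) | right; exists z1; subst].
- right; split=> //; right; exists (nsetU z1 w2); split; first exact: yurU.
  by subst; rewrite nsetUA.
- by right; split=> //; right; exists z2; subst; rewrite nsetUC.
- by right; split=> //; left; subst; rewrite nsetUU.
- by right; split=> //; right; exists w2; subst; rewrite nsetUA [nsetU (y n) w2]nsetUC -nsetUA nsetUU.
- right; split=> //; right; exists (nsetU w1 z2); split; first exact: yurU.
  by subst; rewrite -!nsetUA [nsetU (y n) z2]nsetUC.
- by right; split=> //; right; exists w1; subst; rewrite -nsetUA nsetUU.
- right; split=> //; right; exists (nsetU w1 w2); split; first exact: yurU.
  subst; apply: functional_extensionality => k; rewrite /nsetU.
  by case: (w1 k); case: (w2 k); case: (y n k).
Qed.

Definition Y0 (y : nat -> natset) a b (z : natset) := z = nset0 \/ yur y a b z.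

Lemma Y0U (y : nat -> natset) a b z1 z2 : Y0 y a b z1 -> Y0 y a b z2 -> Y0 y a b (nsetU z1 z2).
Proof.
case=> [->|h1]; first by rewrite nset0U.
case=> [->|h2]; first by rewrite nsetUC nset0U; right.
right; exact: yurU.
Qed.

Lemma fu_yur (y : nat -> natset) n A : fu (fun i => y (n + i)) A -> exists n', yur y n n' A.
Proof.
elim=> [i|X1 X2 _ [a h1] _ [b h2]].
  by exists (n + i).+1; apply: yur1; rewrite ?leq_addr.
exists (maxn a b); apply: yurU.
  by apply: yur_mono h1; rewrite ?leq_maxl.
by apply: yur_mono h2; rewrite ?leq_maxr.
Qed.

Lemma hind_core (X : natfam) (D : nat -> natset) : blockseq D -> large X D ->
  exists e, blockseq e /\ (forall i, fu D (e i)) /\ forall A, fu e A -> X A.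
Proof.
move=> hD hL.
have [W HW] : exists W : natfam -> (nat -> natset) -> natset * nat * (nat -> natset),
  forall Z D, blockseq D -> large Z D ->
    fu D (W Z D).1.1 /\ below (W Z D).1.1 (W Z D).1.2 /\
    (forall i, above ((W Z D).2 i) (W Z D).1.2) /\ cond (W Z D).2 D /\
    large (fun x => Z x /\ Z (nsetU (W Z D).1.1 x)) (W Z D).2.
  have: forall (Z : natfam) (D : nat -> natset), exists w : natset * nat * (nat -> natset),
    blockseq D -> large Z D ->
    fu D w.1.1 /\ below w.1.1 w.1.2 /\
    (forall i, above (w.2 i) w.1.2) /\ cond w.2 D /\
    large (fun x => Z x /\ Z (nsetU w.1.1 x)) w.2.
    move=> Z D'; case: (classic (blockseq D' /\ large Z D')) => [[h1 h2]|hn].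
      have [y [m [D'' H]]] := wk h1 h2; by exists (y, m, D'').
    by exists (nset0, 0, D') => h1 h2; case: hn.
  by move/choice2.
pose Zs n := (hst W X D n).1.
pose Ds n := (hst W X D n).2.
pose y n := (W (Zs n) (Ds n)).1.1.
pose ms n := (W (Zs n) (Ds n)).1.2.
have DsS n : Ds n.+1 = (W (Zs n) (Ds n)).2 by [].
have inv : forall n, blockseq (Ds n) /\ large (Zs n) (Ds n).
  elim=> [|n [h1 h2]]; first by [].
  have [_ [_ [_ [hc hl]]]] := HW _ _ h1 h2.
  by split; [exact: proj1 hc | exact: hl].
have props n := HW _ _ (proj1 (inv n)) (proj2 (inv n)).
have chain : forall n k, cond (Ds (n + k)) (Ds n).
  move=> n; elim=> [|k IH]; first by rewrite addn0; apply: cond_refl; exact: (inv n).1.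
  rewrite addnS; apply: cond_trans IH.
  by have [_ [_ [_ [hc _]]]] := props (n + k).
have yfu : forall n j, n <= j -> fu (Ds n) (y j).
  move=> n j /subnKC <-; apply: fu_trans (proj2 (chain n (j - n))) _.
  by have [h _] := props (n + (j - n)).
have ynon : forall j, exists u, y j u.
  move=> j; exact: fu_nonempty (proj1 (inv j).1) (props j).1.
have ybnd : forall j, below (y j) (ms j) by move=> j; have [_ [h _]] := props j.
have yord : forall i j u v, i < j -> y i u -> y j v -> u < v.
  move=> i j u v hij hu hv.
  have hf := yfu _ _ hij.
  have [_ [_ [ha _]]] := props i.
  have hv' : ms i <= v := fu_above (E := Ds i.+1) ha hf hv.
  exact: leq_trans (ybnd _ _ hu) hv'.
have ytail : forall n, cond (fun i => y (n + i)) (Ds n).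
  move=> n; split; last by move=> i; apply: yfu; exact: leq_addr.
  split; first by move=> i; exact: ynon.
  split; first by move=> i; exists (ms (n + i)); exact: ybnd.
  move=> i j u v hij; apply: yord; by rewrite ltn_add2l.
have Zprop : forall n x, Zs n x -> forall z, Y0 y 0 n z -> X (nsetU z x).
  elim=> [|n IH] x hx z.
    case=> [->|/yur_lt //]; by rewrite nset0U.
  case: hx => h1 h2.
  case=> [->|/yur_dec [hz|[_ [->|[z' [hz' ->]]]]]].
  - rewrite nset0U; have := IH x h1 nset0 (or_introl erefl); by rewrite nset0U.
  - exact: IH x h1 z (or_intror hz).
  - have := IH _ h2 nset0 (or_introl erefl); by rewrite nset0U.
  - rewrite -nsetUA; exact: IH _ h2 z' (or_intror hz').
have [h Hh] : exists h : nat -> natset * nat, forall n, Zs n (h n).1 /\ yur y n (h n).2 (h n).1.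
  have: forall n, exists p : natset * nat, Zs n p.1 /\ yur y n p.2 p.1.
    move=> n; have [A [hA hZ]] := (inv n).2 _ (ytail n).
    have [n' hn'] := fu_yur hA; by exists (A, n').
  by move/choice1.
pose nk k := iter k (fun n => (h n).2) 0.
pose e k := (h (nk k)).1.
have he : forall k, Zs (nk k) (e k) /\ yur y (nk k) (nk k.+1) (e k).
  by move=> k; exact: Hh.
have nkmono := mono_step (fun k => ltnW (yur_lt (he k).2)).
exists e; split.
  split; first by move=> i; exact: yur_nonempty ynon (he i).2.
  split; first by move=> i; apply: yur_bound (he i).2 => j; exists (ms j); exact: ybnd.
  move=> i j u v hij hu hv.
  have [p [/andP [_ hp] hpu]] := yur_mem (he i).2 hu.
  have [q [/andP [hq _] hqv]] := yur_mem (he j).2 hv.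
  apply: yord hpu hqv.
  exact: leq_trans hp (leq_trans (nkmono _ _ hij) hq).
split.
  move=> i; apply: yur_fu (he i).2 => j; exact: yfu (leq0n j).
have char : forall A, fu e A -> exists k z, Y0 y 0 (nk k) z /\ A = nsetU z (e k).
  move=> A; elim=> [k|A1 A2 _ [k1 [z1 [hz1 ->]]] _ [k2 [z2 [hz2 ->]]]].
    by exists k, nset0; rewrite nset0U; split=> //; left.
  have key : forall k1 k2 z1 z2, k1 <= k2 -> Y0 y 0 (nk k1) z1 -> Y0 y 0 (nk k2) z2 ->
      exists k z, Y0 y 0 (nk k) z /\
      nsetU (nsetU z1 (e k1)) (nsetU z2 (e k2)) = nsetU z (e k).
    move=> a b w1 w2; rewrite leq_eqVlt => /orP [/eqP ->|hab] h1 h2; exists b.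
      exists (nsetU w1 w2); split; first exact: Y0U.
      apply: functional_extensionality => n; rewrite /nsetU.
      by case: (w1 n); case: (w2 n); case: (e b n).
    exists (nsetU (nsetU w1 (e a)) w2); split; last by rewrite nsetUA.
    apply: Y0U => //; right.
    have hea : yur y 0 (nk b) (e a).
      apply: yur_mono (he a).2 => //; exact: nkmono.
    case: h1 => [->|h1]; first by rewrite nset0U.
    apply: yurU => //; apply: yur_mono h1 => //; apply: nkmono; exact: ltnW.
  case: (leqP k1 k2) => hk; first exact: key.
  rewrite nsetUC; apply: key => //; exact: ltnW.
move=> A /char [k [z [hz ->]]].
exact: Zprop (he k).1 z hz.
Qed.

Lemma inL_iota (r : nat) k : 1 <= k <= r -> List.In k (iota 1 r).
Proof.
move=> h; have : k \in iota 1 r by rewrite mem_iota add1n ltnS.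
elim: (iota 1 r) => [//|a l IH]; rewrite in_cons => /orP [/eqP ->|/IH h']; [by left|by right].
Qed.

Lemma block_disj (e : nat -> natset) i j u : blockseq e -> i <> j -> e i u -> e j u -> False.
Proof.
move=> [_ [_ ho]] hij hi hj.
case: (ltngtP i j) => h.
- by have := ho _ _ _ _ h hi hj; rewrite ltnn.
- by have := ho _ _ _ _ h hj hi; rewrite ltnn.
- by apply: hij.
Qed.

Lemma ip_block (S : natfam) : IPset S -> exists b, blockseq b /\ forall i, S (b i).
Proof.
move=> [hfin [hU [D [hS [hdiff hdisj]]]]].
have claim : forall m N, exists i, N <= i /\ (exists u, D i u) /\ above (D i) m.
  elim=> [|m IH] N.
    have [n hn] := hdiff N N.+1 (fun e => (n_Sn N) e).
    case hN: (D N n).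
      by exists N; split=> //; split=> //; exists n.
    exists N.+1; split; first exact: leqnSn.
    split=> //; exists n; move: hn; rewrite hN; by case: (D N.+1 n).
  have [i [hi [hne ha]]] := IH N.
  case hm: (D i m).
    have [j [hj [hne' ha']]] := IH i.+1.
    case hm': (D j m).
      have hij : i <> j by move=> e; subst j; rewrite ltnn in hj.
      by have := hdisj i j hij m; rewrite hm hm'.
    exists j; split; first exact: leq_trans hi (ltnW hj).
    split=> // u hu; have := ha' u hu; rewrite leq_eqVlt => /orP [/eqP e|//].
    by subst u; rewrite hu in hm'.
  exists i; split=> //; split=> // u hu; have := ha u hu; rewrite leq_eqVlt => /orP [/eqP e|//].
  by subst u; rewrite hu in hm.
have [pk Hpk] : exists pk : nat -> nat, forall m, (exists u, D (pk m) u) /\ above (D (pk m)) m.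
  have: forall m, exists i, (exists u, D i u) /\ above (D i) m.
    move=> m; have [i [_ h]] := claim m 0; by exists i.
  by move/choice1.
have [bd Hbd] : exists bd : nat -> nat, forall i, below (D i) (bd i).
  have: forall i, exists m, below (D i) m by move=> i; exact: hfin _ (hS i).
  by move/choice1.
pose ms k := iter k (fun m => bd (pk m)) 0.
pose b k := D (pk (ms k)).
have msle : forall k, ms k <= ms k.+1.
  move=> k; have [[u hu] ha] := Hpk (ms k).
  exact: leq_trans (ha _ hu) (ltnW (Hbd _ _ hu)).
have msmono := mono_step msle.
exists b; split; last by move=> i; exact: hS.
split; first by move=> i; exact: (Hpk _).1.
split; first by move=> i; exists (bd (pk (ms i))); exact: Hbd.
move=> i j u v hij hu hv.
have h1 : u < ms i.+1 := Hbd _ _ hu.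
have h2 : ms j <= v := (Hpk (ms j)).2 _ hv.
exact: leq_trans h1 (leq_trans (msmono _ _ hij) h2).
Qed.

Theorem lemma2p4 (S : natfam) (r : nat) (c : natset -> nat) :
  IPset S -> 1 <= r -> (forall A, S A -> 1 <= c A <= r) ->
  (exists S' : natfam, IPset S' /\ (forall A, S' A -> S A) /\
     exists k, forall A, S' A -> c A = k)
  \/
  (exists (Bs : list natset) (T : natfam),
     (forall B, List.In B Bs -> S B) /\ IPset T /\
     (forall A, T A -> fam_minus S Bs A) /\ full_matches c Bs T).
Proof.
move=> hIP hr hc; left.
have hU := proj1 (proj2 hIP).
have [b [hb hbS]] := ip_block hIP.
have fuS : forall A, fu b A -> S A.
  by move=> A; elim=> [i|X Y _ h1 _ h2]; [exact: hbS | exact: hU].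
have hT : large (fun _ => True) b by move=> E hE; exists (E 0); split=> //; exact: fu1.
have hcov : forall X, fu b X -> (fun _ => True) X ->
    exists k, List.In k (iota 1 r) /\ (fun k X => c X = k) k X.
  move=> X hX _; exists (c X); split=> //; apply: inL_iota; exact: hc (fuS _ hX).
have [k [D' [_ [hD' hl]]]] := cover hb hT hcov.
have [e [he [heD hA]]] := hind_core (proj1 hD') hl.
have feS : forall A, fu e A -> S A.
  move=> A hA'; apply: fuS; apply: fu_trans (proj2 hD') _; exact: fu_trans heD hA'.
exists (fu e); split; last first.
  split=> //; by exists k.
split.
  move=> A hA'; have [m hm] := fu_below (proj1 (proj2 he)) hA'; by exists m.
split; first by move=> A B; exact: fuU.
exists e; split; first by move=> i; exact: fu1.
split.
  move=> i j hij; have [u hu] := (proj1 he) i; exists u; rewrite hu.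
  case hj: (e j u) => //; by have := block_disj he hij hu hj.
move=> i j hij n; apply/negP => /andP [h1 h2]; exact: block_disj he hij h1 h2.
Qed.
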